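(* Let $1\le p<\infty$ and let $d_{w,p}$ be a Lorentz sequence space. The set $J^j$ of all operators $T\in L(d_{w,p})$ which can be written as $T=AjB$ with $A\in L(d_{w,p})$ and $B\in L(d_{w,p},\ell_p)$ is a (two-sided) ideal in $L(d_{w,p})$.
   Context: Let $1\le p<\infty$ and let $w=(w_n)$ be a real sequence with $w_1=1$, $w_n\downarrow 0$ and $\sum_n w_n=\infty$. The Lorentz sequence space $d_{w,p}$ is the Banach space of all $x=(x_n)\in c_0$ with $\|x\|_{d_{w,p}}=\big(\sum_{n}w_n (x^*_n)^p\big)^{1/p}<\infty$, where $(x^*_n)$ is the non-increasing rearrangement of $(|x_n|)$. Let $(e_n)$ be the unit vector basis of $d_{w,p}$ and $(f_n)$ that of $\ell_p$. The formal identity $j\colon \ell_p\to d_{w,p}$ is the bounded operator with $j(f_n)=e_n$ (so $j$ maps a sequence to the same sequence). An ideal is a linear subspace $J$ with $ATB\in J$ whenever $T\in J$ and $A,B\in L(d_{w,p})$. *)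

(* Defs.v *)
From mathcomp Require Import all_boot all_order all_algebra.
From mathcomp Require Import all_classical all_reals all_analysis.
Set Implicit Arguments. Unset Strict Implicit. Unset Printing Implicit Defensive.
Import Order.TTheory GRing.Theory Num.Theory numFieldNormedType.Exports.
Local Open Scope ring_scope.
Local Open Scope classical_set_scope.

Section Lorentz.
Variable R : realType.

Definition c0 (x : nat -> R) : Prop := cvg_to (x @ \oo) (nbhs (0 : R)).

Definition distr_le (x : nat -> R) (s : R) (n : nat) : Prop :=
  forall F : seq nat, uniq F -> all (fun k => s < `|x k|) F -> (size F <= n)%N.

(* non-increasing rearrangement (0-indexed: rearr x 0 = x^*_1 = sup |x_k|):
   x^*_{n+1} = inf { s >= 0 : #{k : |x_k| > s} <= n } *)
Definition rearr (x : nat -> R) (n : nat) : R :=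
  inf [set s : R | 0 <= s /\ distr_le x s n].

(* (p-th power of) the Lorentz norm, as an extended real *)
Definition dsum (w : nat -> R) (p : R) (x : nat -> R) : \bar R :=
  (\sum_(0 <= n <oo) ((w n * (rearr x n) `^ p)%:E))%E.

Definition in_d (w : nat -> R) (p : R) (x : nat -> R) : Prop :=
  c0 x /\ (dsum w p x < +oo)%E.

Definition norm_d (w : nat -> R) (p : R) (x : nat -> R) : R :=
  (fine (dsum w p x)) `^ p^-1.

Definition lpsum (p : R) (x : nat -> R) : \bar R :=
  (\sum_(0 <= n <oo) ((`|x n| `^ p)%:E))%E.

Definition in_lp (p : R) (x : nat -> R) : Prop := (lpsum p x < +oo)%E.

Definition norm_lp (p : R) (x : nat -> R) : R := (fine (lpsum p x)) `^ p^-1.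

(* bounded linear operators between sequence spaces given by a membership
   predicate and a norm; an operator is a map on sequences, only its
   restriction to the domain space matters. *)
Definition bounded_op (inX : (nat -> R) -> Prop) (nX : (nat -> R) -> R)
    (inY : (nat -> R) -> Prop) (nY : (nat -> R) -> R)
    (T : (nat -> R) -> (nat -> R)) : Prop :=
  (forall x, inX x -> inY (T x)) /\
  (forall (a : R) x y, inX x -> inX y ->
     T (fun n => a * x n + y n) = (fun n => a * T x n + T y n)) /\
  exists C : R, forall x, inX x -> nY (T x) <= C * nX x.

Definition L_d (w : nat -> R) (p : R) := bounded_op (in_d w p) (norm_d w p) (in_d w p) (norm_d w p).
Definition L_d_lp (w : nat -> R) (p : R) := bounded_op (in_d w p) (norm_d w p) (in_lp p) (norm_lp p).

(* formal identity j : l_p -> d_{w,p} *)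
Definition jid (x : nat -> R) : nat -> R := x.

Definition in_Jj (w : nat -> R) (p : R) (T : (nat -> R) -> (nat -> R)) : Prop :=
  L_d w p T /\
  exists A B, L_d w p A /\ L_d_lp w p B /\
    forall x, in_d w p x -> T x = A (jid (B x)).

(* standing assumptions on the weight sequence (0-indexed: w 0 = w_1) *)
Definition lorentz_weight (w : nat -> R) : Prop :=
  w 0%N = 1 /\ (forall n, w n.+1 <= w n) /\ cvg_to (w @ \oo) (nbhs (0 : R)) /\
  (\sum_(0 <= n <oo) ((w n)%:E))%E = +oo%E.

Definition is_ideal (w : nat -> R) (p : R) (J : ((nat -> R) -> (nat -> R)) -> Prop) : Prop :=
  J (fun _ _ => 0) /\
  (forall T S, J T -> J S -> J (fun x n => T x n + S x n)) /\
  (forall (c : R) T, J T -> J (fun x n => c * T x n)) /\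
  (forall T A B, J T -> L_d w p A -> L_d w p B -> J (fun x => A (T (B x)))).
End Lorentz.

(* Main.v *)
Require Import Defs.
From mathcomp Require Import all_boot all_order all_algebra.
From mathcomp Require Import all_classical all_reals all_analysis.
From mathcomp Require Import ring lra.
Import Order.TTheory GRing.Theory Num.Theory numFieldNormedType.Exports.
Local Open Scope ring_scope.
Local Open Scope classical_set_scope.
Section S.
Variable R : realType.
Implicit Types (x y : nat -> R).

Definition ser (f : nat -> R) : \bar R := (\sum_(0 <= k <oo) (f k)%:E)%E.

Lemma ser_partial (f : nat -> R) N : (forall n, 0 <= f n) -> (ser f < +oo)%E ->
  \sum_(0 <= k < N) f k <= fine (ser f).
Proof.
move=> f0 fin.
have h : (\sum_(0 <= k < N) (f k)%:E <= ser f)%E.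
  by apply: nneseries_lim_ge => n _ _; exact: f0.
have s0 : (0 <= ser f)%E by apply: nneseries_ge0 => n _ _; exact: f0.
have ff : ser f \is a fin_num by rewrite ge0_fin_numE.
by rewrite -lee_fin fineK // -sumEFin.
Qed.

Lemma ser_bound (f : nat -> R) M : (forall n, 0 <= f n) ->
  (forall N, \sum_(0 <= k < N) f k <= M) -> (ser f < +oo)%E /\ fine (ser f) <= M.
Proof.
move=> f0 HN.
have nd := @ereal_nondecreasing_series R (fun k => (f k)%:E) xpredT 0%N (fun n _ _ => f0 n).
have le : (ser f <= M%:E)%E.
  rewrite /ser (cvg_lim _ (ereal_nondecreasing_cvgn nd)) //.
  by apply: ub_ereal_sup => _ [n _ <-]; rewrite /= sumEFin lee_fin.
have s0 : (0 <= ser f)%E by apply: nneseries_ge0 => n _ _; exact: f0.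
have lt : (ser f < +oo)%E by apply: (le_lt_trans le); exact: ltry.
split => //; rewrite -lee_fin fineK // ge0_fin_numE //.
Qed.

Lemma ser_ge0 (f : nat -> R) : (forall n, 0 <= f n) -> 0 <= fine (ser f).
Proof. move=> f0; apply: fine_ge0; apply: nneseries_ge0 => n _ _; exact: f0. Qed.

Definition bnd x := exists M, forall k, `|x k| <= M.

Lemma c0_bnd x : c0 x -> bnd x.
Proof.
move=> h.
have : cvgn x by apply/cvg_ex; exists 0.
move/cvg_seq_bounded.
rewrite /bounded_fun /bounded_near.
move=> [M [_ HM]]; exists (M+1) => k; apply: (HM (M+1)) => //.
by rewrite ltrDl.
Qed.

Lemma distr_bnd x M n : (forall k, `|x k| <= M) -> distr_le x M n.
Proof.
move=> HM F _ Fa; case: F Fa => [|k F] //= /andP[h _].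
by move: (HM k); rewrite leNgt h.
Qed.

Lemma rearr_lb x n : has_lbound [set s : R | 0 <= s /\ distr_le x s n].
Proof. by exists 0 => s [] . Qed.

Lemma rearr_ge0 x n : 0 <= rearr x n.
Proof.
rewrite /rearr; have [[s Hs]|ne] := pselect (nonempty [set s : R | 0 <= s /\ distr_le x s n]).
  by apply: lb_le_inf; [exists s | move=> t []].
suff -> : [set s : R | 0 <= s /\ distr_le x s n] = set0 by rewrite inf0.
by apply/seteqP; split => // t Ht; apply: ne; exists t.
Qed.

Lemma rearr_le_mem x n s : 0 <= s -> distr_le x s n -> rearr x n <= s.
Proof. by move=> s0 hs; apply: (ge_inf (rearr_lb x n)). Qed.

Lemma rearr_adh x n e : bnd x -> 0 < e ->
  exists s, [/\ 0 <= s, distr_le x s n & s < rearr x n + e].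
Proof.
move=> [M HM] e0.
have M0 : 0 <= M by apply: le_trans (HM 0%N).
have [s [s0 hs] lt] := @inf_adherent R [set s : R | 0 <= s /\ distr_le x s n] e e0
  (conj (ex_intro _ M (conj M0 (@distr_bnd x M n HM))) (rearr_lb x n)).
by exists s.
Qed.

Lemma rearr_gen y n x1 m1 x2 m2 c1 c2 : bnd x1 -> bnd x2 -> 0 <= c1 -> 0 <= c2 ->
  (forall s t, 0 <= s -> 0 <= t -> distr_le x1 s m1 -> distr_le x2 t m2 ->
     distr_le y (c1 * s + c2 * t) n) ->
  rearr y n <= c1 * rearr x1 m1 + c2 * rearr x2 m2.
Proof.
move=> b1 b2 c10 c20 H; apply/ler_addgt0Pr => e e0.
set d := e / (c1 + c2 + 1).
have d0 : 0 < d by rewrite divr_gt0 // ltr_wpDl // addr_ge0.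
have [s [s0 hs ls]] := rearr_adh x1 m1 d b1 d0.
have [t [t0 ht lt]] := rearr_adh x2 m2 d b2 d0.
have st0 : 0 <= c1 * s + c2 * t by rewrite addr_ge0 // mulr_ge0.
apply: (le_trans (rearr_le_mem y n _ st0 (H s t s0 t0 hs ht))).
have ed : e = (c1 + c2 + 1) * d by rewrite /d mulrC divfK // gt_eqF // ltr_wpDl // addr_ge0.
rewrite ed.
have h1 : c1 * s <= c1 * (rearr x1 m1 + d) by rewrite ler_wpM2l // ltW.
have h2 : c2 * t <= c2 * (rearr x2 m2 + d) by rewrite ler_wpM2l // ltW.
have := ltW d0. nra.
Qed.

Lemma distr_add x y s t n m : distr_le x s n -> distr_le y t m ->
  distr_le (fun k => x k + y k) (s + t) (n + m).
Proof.
move=> hx hy F uF aF.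
rewrite -(count_predC (fun k => s < `|x k|) F) leq_add //.
  rewrite -size_filter; apply: hx; first exact: filter_uniq.
  by apply/allP => k; rewrite mem_filter => /andP[].
rewrite -size_filter; apply: hy; first exact: filter_uniq.
apply/allP => k; rewrite mem_filter /= -leNgt => /andP[hk kF].
have := allP aF k kF => /= h.
have : s + t < `|x k| + `|y k| by apply: lt_le_trans h (ler_normD _ _).
move=> h2; apply: contraLR h2; rewrite -!leNgt => ht; exact: lerD.
Qed.

Lemma distr_scal x c s n : distr_le x s n -> distr_le (fun k => c * x k) (`|c| * s) n.
Proof.
move=> hx F uF aF; apply: hx => //; apply: sub_all aF => k /=.
rewrite normrM; have [->|c0] := eqVneq c 0; first by rewrite normr0 !mul0r ltxx.
by rewrite ltr_pM2l // normr_gt0.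
Qed.

Lemma distr_sub x (f : nat -> nat) s n : injective f -> distr_le x s n ->
  distr_le (fun k => x (f k)) s n.
Proof.
move=> fi hx F uF aF; rewrite -(size_map f); apply: hx.
  by rewrite map_inj_uniq.
by rewrite all_map.
Qed.

Lemma distr_S x s n : distr_le x s n -> distr_le x s n.+1.
Proof. by move=> hx F uF aF; apply: leqW; apply: hx. Qed.

Lemma bnd_add x y : bnd x -> bnd y -> bnd (fun k => x k + y k).
Proof.
move=> [M HM] [N HN]; exists (M + N) => k.
by apply: le_trans (ler_normD _ _) _; apply: lerD.
Qed.

Lemma rearr_add x y n : bnd x -> bnd y ->
  rearr (fun k => x k + y k) n.*2 <= rearr x n + rearr y n.
Proof.
move=> bx hy; rewrite -[rearr x n]mul1r -[rearr y n]mul1r.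
apply: rearr_gen => // s t _ _ hs ht; rewrite !mul1r -addnn; exact: distr_add.
Qed.

Lemma rearr_S x n : bnd x -> rearr x n.+1 <= rearr x n.
Proof.
move=> bx; rewrite -[rearr x n]mul1r -[_ * _]addr0 -(mul0r (rearr x n)).
apply: rearr_gen => // s t _ _ hs _; rewrite mul1r mul0r addr0; exact: distr_S.
Qed.

Lemma rearr_scal x c n : bnd x -> rearr (fun k => c * x k) n <= `|c| * rearr x n.
Proof.
move=> bx; rewrite -[_ * _]addr0 -(mul0r (rearr x n)).
apply: rearr_gen => // s t _ _ hs _; rewrite mul0r addr0; exact: distr_scal.
Qed.

Lemma rearr_sub x (f : nat -> nat) n : bnd x -> injective f ->
  rearr (fun k => x (f k)) n <= rearr x n.
Proof.
move=> bx fi; rewrite -[rearr x n]mul1r -[_ * _]addr0 -(mul0r (rearr x n)).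
apply: rearr_gen => // s t _ _ hs _; rewrite mul1r mul0r addr0; exact: distr_sub.
Qed.

Lemma pow_sub (a b q : R) : 0 <= a -> 0 <= b -> 0 <= q ->
  (a + b) `^ q <= 2 `^ q * (a `^ q + b `^ q).
Proof.
move=> a0 b0 q0.
wlog ab : a b a0 b0 / a <= b.
  move=> H; have [h|h] := leP a b; first exact: H.
  by rewrite addrC [a `^ q + _]addrC; apply: H => //; exact: ltW.
have h1 : a + b <= 2 * b by rewrite mulr2n mulrDl mul1r lerD2r.
apply: (le_trans (ge0_ler_powR q0 _ _ h1)); rewrite ?nnegrE ?addr_ge0 ?mulr_ge0 //.
rewrite powRM // ler_wpM2l ?powR_ge0 // lerDr powR_ge0 //.
Qed.

Lemma sum_double (f : nat -> R) N :
  \sum_(0 <= k < N.*2) f k = \sum_(0 <= n < N) (f n.*2 + f n.*2.+1).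
Proof.
elim: N => [|N IH]; first by rewrite !big_geq.
rewrite doubleS !big_nat_recr //= IH -addrA //.
Qed.

Lemma sum_mono (f : nat -> R) N M : (forall n, 0 <= f n) -> (N <= M)%N ->
  \sum_(0 <= k < N) f k <= \sum_(0 <= k < M) f k.
Proof.
move=> f0 NM; rewrite (big_cat_nat (leq0n N) NM) /= lerDl.
by apply: sumr_ge0 => i _.
Qed.

Section L.
Variables (p : R) (w : nat -> R).
Hypothesis hp : 1 <= p.
Hypothesis hw : lorentz_weight w.

Lemma p_gt0 : 0 < p.
Proof. by apply: lt_le_trans hp. Qed.
Lemma p_ge0 : 0 <= p.
Proof. exact: ltW p_gt0. Qed.
Lemma pinv_ge0 : 0 <= p^-1.
Proof. by rewrite invr_ge0 p_ge0. Qed.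

Lemma w_le m n : (m <= n)%N -> w n <= w m.
Proof.
case: hw => _ [hs _]; elim: n => [|n IH]; first by rewrite leqn0 => /eqP ->.
rewrite leq_eqVlt => /orP[/eqP ->//|]; rewrite ltnS => /IH; exact: le_trans (hs n).
Qed.

Lemma w_ge0 n : 0 <= w n.
Proof.
case: hw => _ [_ [hc _]].
have cw : cvgn w by apply/cvg_ex; exists 0.
have -> : 0 = limn w by rewrite (cvg_lim _ hc).
by apply: nonincreasing_cvgn_ge => // a b ab; exact: w_le.
Qed.

Definition term x k := w k * rearr x k `^ p.
Lemma term_ge0 x k : 0 <= term x k.
Proof. by rewrite mulr_ge0 ?w_ge0 ?powR_ge0. Qed.

Definition D x := fine (dsum w p x).

Lemma d_partial x N : in_d w p x -> \sum_(0 <= k < N) term x k <= D x.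
Proof. by move=> [_ h]; apply: ser_partial => //; exact: term_ge0. Qed.

Lemma d_of x M : c0 x -> (forall N, \sum_(0 <= k < N) term x k <= M) ->
  in_d w p x /\ D x <= M.
Proof.
move=> cx H; have [h1 h2] := @ser_bound (term x) M (term_ge0 x) H.
by split => //; split.
Qed.

Lemma normdE x : norm_d w p x = D x `^ p^-1.
Proof. by []. Qed.

Lemma D_ge0 x : 0 <= D x.
Proof. apply: ser_ge0; exact: term_ge0. Qed.

Lemma in_d_bnd x : in_d w p x -> bnd x.
Proof. by move=> [h _]; apply: c0_bnd. Qed.

Definition Kadd := (2 * 2 `^ p) `^ p^-1 * 2 `^ p^-1.
Lemma Kadd_ge0 : 0 <= Kadd.
Proof. by rewrite mulr_ge0 ?powR_ge0. Qed.

Lemma term_add x y n : bnd x -> bnd y ->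
  term (fun k => x k + y k) n.*2 + term (fun k => x k + y k) n.*2.+1
  <= (2 * 2 `^ p) * (term x n + term y n).
Proof.
move=> bx hy; set z := fun k => x k + y k.
have bz : bnd z by apply: bnd_add.
have r1 := rearr_add x y n bx hy.
have r2 := rearr_S z n.*2 bz.
have q1 : rearr z n.*2 `^ p <= (rearr x n + rearr y n) `^ p.
  by apply: ge0_ler_powR; rewrite ?nnegrE ?addr_ge0 ?rearr_ge0 ?p_ge0.
have q2 : rearr z n.*2.+1 `^ p <= (rearr x n + rearr y n) `^ p.
  apply: le_trans q1; apply: ge0_ler_powR; rewrite ?nnegrE ?rearr_ge0 ?p_ge0 //.
have q3 := pow_sub _ _ _ (rearr_ge0 x n) (rearr_ge0 y n) p_ge0.
have w1 : w n.*2 <= w n by apply: w_le; rewrite -addnn leq_addr.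
have w2 : w n.*2.+1 <= w n by apply: w_le; rewrite -addnn ltnW // ltnS leq_addr.
rewrite /term.
set A := (rearr x n + rearr y n) `^ p.
set B := 2 `^ p.
have A0 : 0 <= A by exact: powR_ge0.
have wn0 := w_ge0 n.
have e1 : w n.*2 * rearr z n.*2 `^ p <= w n * A.
  by apply: ler_pM; rewrite ?w_ge0 ?powR_ge0.
have e2 : w n.*2.+1 * rearr z n.*2.+1 `^ p <= w n * A.
  by apply: ler_pM; rewrite ?w_ge0 ?powR_ge0.
have e3 : w n * A <= w n * (B * (rearr x n `^ p + rearr y n `^ p)) by rewrite ler_wpM2l.
apply: le_trans (lerD e1 e2) _.
have -> : (2 * B) * (w n * rearr x n `^ p + w n * rearr y n `^ p) =
  2 * (w n * (B * (rearr x n `^ p + rearr y n `^ p))) by ring.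
by rewrite mulr2n mulrDl mul1r; apply: lerD.
Qed.

Lemma c0_add x y : c0 x -> c0 y -> c0 (fun k => x k + y k).
Proof. move=> hx hy; rewrite /c0 -[0 : R]addr0; exact: cvgD. Qed.

Lemma d_add x y : in_d w p x -> in_d w p y ->
  in_d w p (fun k => x k + y k) /\
  norm_d w p (fun k => x k + y k) <= Kadd * (norm_d w p x + norm_d w p y).
Proof.
move=> dx dy; set z := fun k => x k + y k.
have bx := in_d_bnd x dx; have bY := in_d_bnd y dy.
have K0 : 0 <= 2 * 2 `^ p :> R by rewrite mulr_ge0 ?powR_ge0.
have HN : forall N, \sum_(0 <= k < N) term z k <= 2 * 2 `^ p * (D x + D y).
  move=> N.
  apply: le_trans (sum_mono (term z) N N.*2 (term_ge0 z) _) _; first by rewrite -addnn leq_addr.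
  rewrite sum_double.
  apply: le_trans (ler_sum _ (fun n _ => term_add x y n bx bY)) _.
  rewrite -mulr_sumr ler_wpM2l // big_split /=.
  by apply: lerD; apply: d_partial.
have [dz Dz] := d_of z _ (c0_add x y dx.1 dy.1) HN.
split; first exact: dz.
rewrite !normdE.
have Dx0 := D_ge0 x; have Dy0 := D_ge0 y; have Dz0 := D_ge0 z.
have S0 : 0 <= D x + D y := addr_ge0 Dx0 Dy0.
have KS0 : 0 <= 2 * 2 `^ p * (D x + D y) := mulr_ge0 K0 S0.
have h1 : D z `^ p^-1 <= (2 * 2 `^ p * (D x + D y)) `^ p^-1.
  by apply: (ge0_ler_powR pinv_ge0).
apply: (le_trans h1).
rewrite (powRM _ K0 S0) /Kadd -mulrA.
apply: ler_wpM2l; first exact: powR_ge0.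
exact: (pow_sub (D x) (D y) (p^-1) Dx0 Dy0 pinv_ge0).
Qed.

Lemma c0_scal x c : c0 x -> c0 (fun k => c * x k).
Proof. move=> hx; rewrite /c0 -(mulr0 c); exact: cvgM (cvg_cst c) hx. Qed.

Lemma c0_sub x (f : nat -> nat) : (forall n, (n <= f n)%N) -> c0 x -> c0 (fun k => x (f k)).
Proof.
move=> hf hx; rewrite /c0.
have hinf : f @ \oo --> \oo.
  apply/cvgnyPge => A; near=> n; apply: leq_trans (hf n); near: n; by exists A.
exact: (cvg_comp _ _ hinf hx).
Unshelve. all: by end_near.
Qed.

Lemma d_scal x c : in_d w p x ->
  in_d w p (fun k => c * x k) /\
  norm_d w p (fun k => c * x k) <= (`|c| `^ p) `^ p^-1 * norm_d w p x.
Proof.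
move=> dx; set z := fun k => c * x k.
have bx := in_d_bnd x dx.
have c0 : 0 <= `|c| `^ p := powR_ge0 _ _.
have tz : forall n, term z n <= `|c| `^ p * term x n.
  move=> n; rewrite /term mulrCA; apply: ler_wpM2l; first exact: w_ge0.
  rewrite -(powRM _ (normr_ge0 c) (rearr_ge0 x n)).
  apply: (ge0_ler_powR p_ge0); rewrite ?nnegrE ?rearr_ge0 ?mulr_ge0 ?normr_ge0 ?rearr_ge0 //.
  exact: rearr_scal.
have HN : forall N, \sum_(0 <= k < N) term z k <= `|c| `^ p * D x.
  move=> N; apply: le_trans (ler_sum _ (fun n _ => tz n)) _.
  rewrite -mulr_sumr; apply: ler_wpM2l => //; exact: d_partial.
have [dz Dz] := d_of z _ (c0_scal x c dx.1) HN.
split; first exact: dz.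
rewrite !normdE.
have Dx0 := D_ge0 x.
have h1 : D z `^ p^-1 <= (`|c| `^ p * D x) `^ p^-1.
  apply: (ge0_ler_powR pinv_ge0); rewrite ?nnegrE; [exact: D_ge0 | exact: mulr_ge0 | exact: Dz].
by apply: (le_trans h1); rewrite (powRM _ c0 Dx0).
Qed.

Lemma d_sub x (f : nat -> nat) : injective f -> (forall n, (n <= f n)%N) -> in_d w p x ->
  in_d w p (fun k => x (f k)) /\ norm_d w p (fun k => x (f k)) <= norm_d w p x.
Proof.
move=> fi hf dx; set z := fun k => x (f k).
have bx := in_d_bnd x dx.
have tz : forall n, term z n <= term x n.
  move=> n; rewrite /term; apply: ler_wpM2l; first exact: w_ge0.
  apply: (ge0_ler_powR p_ge0); rewrite ?nnegrE ?rearr_ge0 //.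
  exact: rearr_sub.
have HN : forall N, \sum_(0 <= k < N) term z k <= D x.
  move=> N; apply: le_trans (ler_sum _ (fun n _ => tz n)) (d_partial x N dx).
have [dz Dz] := d_of z _ (c0_sub x f hf dx.1) HN.
split; first exact: dz.
rewrite !normdE.
apply: (ge0_ler_powR pinv_ge0); rewrite ?nnegrE; [exact: D_ge0 | exact: D_ge0 | exact: Dz].
Qed.

Definition lterm (u : nat -> R) k := `|u k| `^ p.
Lemma lterm_ge0 (u : nat -> R) k : 0 <= lterm u k.
Proof. exact: powR_ge0. Qed.
Definition L (u : nat -> R) := fine (lpsum p u).
Lemma normlpE (u : nat -> R) : norm_lp p u = L u `^ p^-1.
Proof. by []. Qed.
Lemma L_ge0 (u : nat -> R) : 0 <= L u.
Proof. apply: ser_ge0; exact: lterm_ge0. Qed.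
Lemma lp_partial (u : nat -> R) N : in_lp p u -> \sum_(0 <= k < N) lterm u k <= L u.
Proof. by move=> h; apply: ser_partial => //; exact: lterm_ge0. Qed.
Lemma lp_of (u : nat -> R) M : (forall N, \sum_(0 <= k < N) lterm u k <= M) -> in_lp p u /\ L u <= M.
Proof. move=> H; exact: (@ser_bound (lterm u) M (lterm_ge0 u) H). Qed.

Definition il (u v : nat -> R) k := if odd k then v k./2 else u k./2.

Lemma lp_il (u v : nat -> R) : in_lp p u -> in_lp p v ->
  in_lp p (il u v) /\ norm_lp p (il u v) <= 2 `^ p^-1 * (norm_lp p u + norm_lp p v).
Proof.
move=> hu hv.
have HN : forall N, \sum_(0 <= k < N) lterm (il u v) k <= L u + L v.
  move=> N.
  apply: le_trans (sum_mono (lterm (il u v)) N N.*2 (lterm_ge0 _) _) _.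
    by rewrite -addnn leq_addr.
  rewrite sum_double.
  have -> : \sum_(0 <= n < N) (lterm (il u v) n.*2 + lterm (il u v) n.*2.+1) =
            \sum_(0 <= n < N) (lterm u n + lterm v n).
    apply: eq_bigr => n _; rewrite /lterm /il odd_double /= odd_double /= doubleK.
    by rewrite uphalf_double.
  rewrite big_split /=; exact: lerD (lp_partial u N hu) (lp_partial v N hv).
have [hz Lz] := lp_of _ _ HN.
split; first exact: hz.
rewrite !normlpE.
have Lu0 := L_ge0 u; have Lv0 := L_ge0 v.
have h1 : L (il u v) `^ p^-1 <= (L u + L v) `^ p^-1.
  apply: (ge0_ler_powR pinv_ge0); rewrite ?nnegrE; [exact: L_ge0 | exact: addr_ge0 | exact: Lz].
exact: (le_trans h1 (pow_sub (L u) (L v) (p^-1) Lu0 Lv0 pinv_ge0)).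
Qed.

Lemma p_neq0 : p != 0.
Proof. by rewrite (gt_eqF p_gt0). Qed.
Lemma pinv_neq0 : p^-1 != 0.
Proof. by rewrite invr_eq0 p_neq0. Qed.

Lemma lp_zero : in_lp p (fun _ => 0 : R) /\ norm_lp p (fun _ => 0 : R) = 0.
Proof.
have HN : forall N, \sum_(0 <= k < N) lterm (fun _ => 0 : R) k <= 0.
  move=> N; rewrite big1 // => k _; by rewrite /lterm normr0 powR0 // p_neq0.
have [hz Lz] := lp_of _ _ HN.
split; first exact: hz.
rewrite normlpE.
have -> : L (fun _ => 0 : R) = 0 by apply: le_anti; apply/andP; split; [exact: Lz | exact: L_ge0].
by rewrite powR0 // pinv_neq0.
Qed.

Lemma d_zero : in_d w p (fun _ => 0 : R) /\ norm_d w p (fun _ => 0 : R) = 0.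
Proof.
have r0 : forall k, rearr (fun _ => 0 : R) k = 0.
  move=> k.
  apply: le_anti; apply/andP; split; last exact: rearr_ge0.
  apply: rearr_le_mem; first exact: lexx.
  apply: distr_bnd => i; rewrite normr0; exact: lexx.
have HN : forall N, \sum_(0 <= k < N) term (fun _ => 0 : R) k <= 0.
  move=> N; rewrite big1 // => k _; by rewrite /term r0 powR0 ?mulr0 // p_neq0.
have c00 : c0 (fun _ : nat => (0 : R)) by exact: cvg_cst.
have [hz Dz] := d_of _ _ c00 HN.
split; first exact: hz.
rewrite normdE.
have -> : D (fun _ => 0 : R) = 0 by apply: le_anti; apply/andP; split; [exact: Dz | exact: D_ge0].
by rewrite powR0 // pinv_neq0.
Qed.

Lemma Ld_add T S : L_d w p T -> L_d w p S -> L_d w p (fun x n => T x n + S x n).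
Proof.
move=> [T1 [T2 [CT HT]]] [S1 [S2 [CS HS]]]; split.
  by move=> x dx; exact: (d_add _ _ (T1 x dx) (S1 x dx)).1.
split.
  move=> a x y dx dy; apply: funext => n; rewrite (T2 a x y dx dy) (S2 a x y dx dy).
  ring.
exists (Kadd * (Num.max CT 0 + Num.max CS 0)) => x dx.
have [_ h] := d_add _ _ (T1 x dx) (S1 x dx).
apply: (le_trans h); rewrite -mulrA; apply: ler_wpM2l; first exact: Kadd_ge0.
rewrite mulrDl; have nx : 0 <= norm_d w p x := powR_ge0 _ _.
apply: lerD.
  apply: (le_trans (HT x dx)); apply: ler_wpM2r => //; rewrite le_max lexx; exact: isT.
apply: (le_trans (HS x dx)); apply: ler_wpM2r => //; rewrite le_max lexx; exact: isT.
Qed.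

Lemma Ld_scal c T : L_d w p T -> L_d w p (fun x n => c * T x n).
Proof.
move=> [T1 [T2 [CT HT]]]; split.
  by move=> x dx; exact: (d_scal _ c (T1 x dx)).1.
split.
  move=> a x y dx dy; apply: funext => n; rewrite (T2 a x y dx dy).
  ring.
exists ((`|c| `^ p) `^ p^-1 * Num.max CT 0) => x dx.
have [_ h] := d_scal _ c (T1 x dx).
apply: (le_trans h); rewrite -mulrA; apply: ler_wpM2l; first exact: powR_ge0.
have nx : 0 <= norm_d w p x := powR_ge0 _ _.
apply: (le_trans (HT x dx)); apply: ler_wpM2r => //; rewrite le_max lexx; exact: isT.
Qed.

Lemma Ld_sub (f : nat -> nat) : injective f -> (forall n, (n <= f n)%N) ->
  L_d w p (fun y k => y (f k)).
Proof.
move=> fi hf; split.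
  by move=> x dx; exact: (d_sub _ _ fi hf dx).1.
split; first by [].
exists 1 => x dx; rewrite mul1r; exact: (d_sub _ _ fi hf dx).2.
Qed.
End L.

Lemma bop_comp inX nX inY nY inZ nZ T A : (forall y, inY y -> 0 <= nY y) ->
  bounded_op inX nX inY nY T -> bounded_op inY nY inZ nZ A ->
  bounded_op inX nX inZ nZ (fun x => A (T x)).
Proof.
move=> nY0 [T1 [T2 [CT HT]]] [A1 [A2 [CA HA]]]; split.
  by move=> x dx; apply: A1; apply: T1.
split.
  by move=> a x y dx dy; rewrite (T2 a x y dx dy) (A2 a _ _ (T1 x dx) (T1 y dy)).
exists (Num.max CA 0 * CT) => x dx.
apply: (le_trans (HA _ (T1 x dx))).
have n0 := nY0 _ (T1 x dx).
apply: (@le_trans _ _ (Num.max CA 0 * nY (T x))).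
  apply: ler_wpM2r => //; rewrite le_max lexx; exact: isT.
rewrite -mulrA; apply: ler_wpM2l; first by rewrite le_max lexx orbT.
exact: HT.
Qed.

Section M.
Variables (p : R) (w : nat -> R).
Hypothesis hp : 1 <= p.
Hypothesis hw : lorentz_weight w.

Lemma nd0 y : in_d w p y -> 0 <= norm_d w p y.
Proof. by move=> _; exact: powR_ge0. Qed.

Lemma Ld_comp T A : L_d w p T -> L_d w p A -> L_d w p (fun x => A (T x)).
Proof. exact: bop_comp nd0. Qed.

Lemma Ldlp_comp T B : L_d w p T -> L_d_lp w p B -> L_d_lp w p (fun x => B (T x)).
Proof. exact: bop_comp nd0. Qed.

Lemma main_aux : is_ideal w p (in_Jj w p).
Proof.
have [dz nz] := d_zero p w hp hw; have [lz nlz] := lp_zero p hp.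
have Ld0 : L_d w p (fun _ _ => 0).
  split; first by move=> x _.
  split; first by move=> a x y _ _; apply: funext => n; rewrite mulr0 addr0.
  exists 0 => x _; rewrite nz mul0r; exact: lexx.
have Llp0 : L_d_lp w p (fun _ _ => 0).
  split; first by move=> x _.
  split; first by move=> a x y _ _; apply: funext => n; rewrite mulr0 addr0.
  exists 0 => x _; rewrite nlz mul0r; exact: lexx.
split.
  by split => //; exists (fun _ _ => 0), (fun _ _ => 0).
split.
  move=> T S [LT [A1 [B1 [LA1 [LB1 HT]]]]] [LS [A2 [B2 [LA2 [LB2 HS]]]]].
  split; first exact: (Ld_add p w hp hw).
  have LE : L_d w p (fun y k => y k.*2).
    apply: (Ld_sub p w hp hw); [exact: double_inj | by move=> n; rewrite -addnn leq_addr].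
  have LO : L_d w p (fun y k => y k.*2.+1).
    apply: (Ld_sub p w hp hw); first by move=> a b [] /double_inj.
    by move=> n; rewrite -addnn ltnW // ltnS leq_addr.
  exists (fun y n => A1 (fun k => y k.*2) n + A2 (fun k => y k.*2.+1) n).
  exists (fun x => il (B1 x) (B2 x)).
  split; first by apply: (Ld_add p w hp hw); apply: Ld_comp.
  split.
    case: LB1 => [B11 [B12 [C1 HB1]]]; case: LB2 => [B21 [B22 [C2 HB2]]].
    split; first by move=> x dx; exact: (lp_il p hp _ _ (B11 x dx) (B21 x dx)).1.
    split.
      move=> a x y dx dy; apply: funext => k; rewrite /il (B12 a x y dx dy) (B22 a x y dx dy).
      by case: (odd k).
    exists (2 `^ p^-1 * (Num.max C1 0 + Num.max C2 0)) => x dx.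
    have [_ h] := lp_il p hp _ _ (B11 x dx) (B21 x dx).
    apply: (le_trans h); rewrite -mulrA; apply: ler_wpM2l; first exact: powR_ge0.
    rewrite mulrDl; have nx : 0 <= norm_d w p x := powR_ge0 _ _.
    apply: lerD.
      apply: (le_trans (HB1 x dx)); apply: ler_wpM2r => //; rewrite le_max lexx; exact: isT.
    apply: (le_trans (HB2 x dx)); apply: ler_wpM2r => //; rewrite le_max lexx; exact: isT.
  move=> x dx; rewrite (HT x dx) (HS x dx) /jid.
  have e1 : (fun k => il (B1 x) (B2 x) k.*2) = B1 x.
    by apply: funext => k; rewrite /il odd_double doubleK.
  have e2 : (fun k => il (B1 x) (B2 x) k.*2.+1) = B2 x.
    by apply: funext => k; rewrite /il /= odd_double /= uphalf_double.
  by rewrite e1 e2.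
split.
  move=> c T [LT [A [B [LA [LB HT]]]]].
  split; first exact: (Ld_scal p w hp hw).
  exists (fun y n => c * A y n), B; split; first exact: (Ld_scal p w hp hw).
  split => // x dx; by rewrite (HT x dx).
move=> T A' B' [LT [A [B [LA [LB HT]]]]] LA' LB'.
split; first exact: (Ld_comp _ _ (Ld_comp _ _ LB' LT) LA').
exists (fun y => A' (A y)), (fun x => B (B' x)).
split; first exact: (Ld_comp _ _ LA LA').
split; first exact: (Ldlp_comp _ _ LB' LB).
move=> x dx; rewrite (HT _ (LB'.1 x dx)) //.
Qed.
End M.
End S.

Theorem proposition4p1 (R : realType) (p : R) (w : nat -> R) :
  1 <= p -> lorentz_weight w -> is_ideal w p (in_Jj w p).
Proof. move=> hp hw; exact: main_aux hp hw. Qed.
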